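(* Let $N=\{1,\dots,n\}$ be a set of $n\ge 1$ agents and $M$ a set of $m$ indivisible goods. Write $m = kn + r$ with $k=\lfloor m/n\rfloor$ and $0\le r<n$. Suppose every agent $i$ has an additive leveled valuation $V_i:2^M\to\mathbb{R}_{\ge 0}$. Fix an arbitrary picking order $\sigma=(\sigma_1,\dots,\sigma_n)$ of the agents and run the following sequential procedure: for $t=1,\dots,n-r$, agent $\sigma_t$ receives a bundle of exactly $k$ still-unallocated goods that maximizes $V_{\sigma_t}$ among all such bundles; then for $t=n-r+1,\dots,n$, agent $\sigma_t$ receives a bundle of exactly $k+1$ still-unallocated goods that maximizes $V_{\sigma_t}$ among all such bundles (ties broken arbitrarily). Then the resulting allocation $B=(B_1,\dots,B_n)$ satisfies $V_i(B_i)\ge \frac{k}{k+1}\,\mu_i$ for every agent $i\in N$, i.e., it is $\frac{\lfloor m/n\rfloor}{\lfloor m/n\rfloor+1}$-MMS. In particular, a $\frac{\lfloor m/n\rfloor}{\lfloor m/n\rfloor+1}$-MMS allocation always exists under additive leveled valuations.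
   Context: A valuation $V:2^M\to\mathbb{R}_{\ge 0}$ is additive if $V(S)=\sum_{g\in S}V(\{g\})$ for all $S\subseteq M$. It is leveled if for any bundles $S,T\subseteq M$ with $|S|>|T|$ we have $V(S)>V(T)$. It is additive leveled if it is both. An allocation is a partition $B=(B_1,\dots,B_n)$ of $M$ into $n$ pairwise disjoint bundles (possibly empty) with $\bigcup_i B_i=M$, where $B_i$ is given to agent $i$; $\Pi_n(M)$ denotes the set of all such partitions. The maximin share of agent $i$ is $\mu_i=\max_{B'\in\Pi_n(M)}\min_{j\in N}V_i(B'_j)$. For $\alpha\in[0,1]$, an allocation $B$ is $\alpha$-MMS if $V_i(B_i)\ge \alpha\,\mu_i$ for all $i\in N$. *)

(* Defs.v *)
From HB Require Import structures.
From mathcomp Require Import all_boot all_order all_algebra.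
From mathcomp Require Import perm.
Set Implicit Arguments. Unset Strict Implicit. Unset Printing Implicit Defensive.
Import Order.TTheory GRing.Theory Num.Theory.
Local Open Scope ring_scope.

Section Defs.
Variable R : realFieldType.
Variable M : finType.
Variable n : nat.

Definition seqmax (s : seq R) : R := \big[Num.max/head 0 s]_(x <- s) x.
Definition seqmin (s : seq R) : R := \big[Num.min/head 0 s]_(x <- s) x.

Definition additive_leveled (V : {set M} -> R) : Prop :=
  [/\ forall S, 0 <= V S,
      forall S, V S = \sum_(g in S) V [set g]
    & forall S T : {set M}, (#|T| < #|S|)%N -> V T < V S].

Definition is_allocation (B : {ffun 'I_n -> {set M}}) : bool :=
  [forall i, forall j, (i != j) ==> [disjoint B i & B j]]
  && (\bigcup_(i : 'I_n) B i == [set: M]).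

Definition mms (V : 'I_n -> {set M} -> R) (i : 'I_n) : R :=
  seqmax [seq seqmin [seq V i (B j) | j <- enum 'I_n]
         | B : {ffun 'I_n -> {set M}} <- enum [pred B : {ffun 'I_n -> {set M}} | is_allocation B]].

Definition alpha_MMS (V : 'I_n -> {set M} -> R) (alpha : R)
  (B : {ffun 'I_n -> {set M}}) : Prop :=
  forall i, alpha * mms V i <= V i (B i).

Definition allocated_before (sigma : {perm 'I_n}) (B : {ffun 'I_n -> {set M}})
  (t : 'I_n) : {set M} :=
  \bigcup_(t' : 'I_n | (t' < t)%N) B (sigma t').

Definition pick_size (t : 'I_n) : nat :=
  let k := (#|M| %/ n)%N in let r := (#|M| %% n)%N in
  if (t < n - r)%N then k else k.+1.

(* B is a possible outcome of the sequential procedure with order sigma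
   (ties broken arbitrarily) *)
Definition picking_run (V : 'I_n -> {set M} -> R) (sigma : {perm 'I_n})
  (B : {ffun 'I_n -> {set M}}) : Prop :=
  forall t : 'I_n,
    let j := sigma t in
    let Rem := ~: allocated_before sigma B t in
    [/\ B j \subset Rem,
        #|B j| = pick_size t
      & forall S : {set M}, S \subset Rem -> #|S| = pick_size t ->
          V j S <= V j (B j)].

End Defs.

(* Main.v *)
Require Import Defs.
From HB Require Import structures.
From mathcomp Require Import all_boot all_order all_algebra.
From mathcomp Require Import perm.
From mathcomp Require Import zify ring lra.
Import Order.TTheory GRing.Theory Num.Theory.
Local Open Scope ring_scope.
Set Implicit Arguments. Unset Strict Implicit. Unset Printing Implicit Defensive.

Section Gen.
Variable R : realFieldType.
Variable M : finType.

Lemma bigmin_le (d : R) s x : x \in s -> \big[Num.min/d]_(y <- s) y <= x.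
Proof.
elim: s => //= a s IH; rewrite in_cons big_cons => /orP [/eqP->|xs].
  by rewrite ge_min lexx.
by rewrite ge_min (IH xs) orbT.
Qed.

Lemma bigmax_le (d X : R) s : d <= X -> (forall x, x \in s -> x <= X) ->
  \big[Num.max/d]_(y <- s) y <= X.
Proof.
move=> dX; elim: s => [|a s IH] H; first by rewrite big_nil.
rewrite big_cons ge_max H ?mem_head //= IH // => x xs; apply: H.
by rewrite in_cons xs orbT.
Qed.

Lemma card_bigcup_le (I : finType) (P : pred I) (F : I -> {set M}) :
  (#|\bigcup_(i | P i) F i| <= \sum_(i | P i) #|F i|)%N.
Proof.
elim/big_rec2: _ => [|i m U _ le]; first by rewrite cards0.
by rewrite (leq_trans (leq_card_setU (F i) U).1) ?leq_add2l.
Qed.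

Lemma card_disj_bigcup (I : finType) (F : I -> {set M}) :
  (forall i j, i != j -> [disjoint F i & F j]) ->
  #|\bigcup_i F i| = (\sum_i #|F i|)%N.
Proof.
move=> H; rewrite -sum1_card (partition_disjoint_bigcup _ _ H).
by apply: eq_bigr => i _; rewrite sum1_card.
Qed.

Lemma subset_of_size (A : {set M}) (s : nat) : (s <= #|A|)%N ->
  exists S : {set M}, (S \subset A) && (#|S| == s).
Proof.
move=> sA; exists [set x in take s (enum A)]; apply/andP; split.
  by apply/subsetP => x; rewrite inE => /mem_take; rewrite mem_enum.
rewrite cardsE (card_uniqP _) ?take_uniq ?enum_uniq // size_take.
by rewrite -cardE; case: ltngtP sA => // ->.
Qed.

Variable V : {set M} -> R.
Hypothesis hV : additive_leveled V.

Lemma V_ge0 (S : {set M}) : 0 <= V S. Proof. by case: hV. Qed.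
Lemma V_add (S : {set M}) : V S = \sum_(g in S) V [set g]. Proof. by case: hV. Qed.
Lemma V_lev (S T : {set M}) : (#|T| < #|S|)%N -> V T < V S. Proof. by case: hV => _ _; apply. Qed.

Lemma V_ID (S T : {set M}) : V S = V (S :&: T) + V (S :\: T).
Proof. by rewrite V_add (big_setID T) -!V_add. Qed.

Lemma V_disjU (S T : {set M}) : [disjoint S & T] -> V (S :|: T) = V S + V T.
Proof.
move=> d; rewrite (V_ID (S :|: T) S) setUK setDUl setDv set0U.
by rewrite (setDidPl _) // disjoint_sym.
Qed.

Lemma V_min (S : {set M}) : S != set0 ->
  exists2 h, h \in S & #|S|%:R * V [set h] <= V S.
Proof.
case/set0Pn => g0 g0S.
have [h hS hmin] := @arg_minP _ _ _ g0 (fun g => g \in S) (fun g => V [set g]) g0S.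
exists h => //; rewrite mulr_natl -sumr_const (V_add S).
by apply: ler_sum => g gS; exact: hmin.
Qed.

Lemma key_part (P S : {set M}) h : h \in P -> h \in S -> (#|P| <= #|S|)%N ->
  V P < V S + V [set h].
Proof.
move=> hP hS cPS.
rewrite (V_ID P S) (V_ID S P) setIC -addrA ltrD2l.
have hD : h \notin S :\: P by rewrite inE hP.
rewrite -V_disjU; last by rewrite disjoint_sym disjoints1.
apply: V_lev; rewrite setUC cardsU1 hD /=.
have := cardsID S P; have := cardsID P S; rewrite (setIC S P).
move: cPS; set a := #|_|; set b := #|_|; set c := #|_|; set d := #|_|; set e := #|_|.
lia.
Qed.

Lemma key_gen (P S : {set M}) g : g \notin S -> (#|P| <= #|S|)%N ->
  V P < V S + V [set g].
Proof.
move=> gS cPS; rewrite addrC -V_disjU ?disjoints1 //.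
by apply: V_lev; rewrite cardsU1 gS.
Qed.

Lemma key_swap (Rem S : {set M}) g h : S \subset Rem -> g \in Rem -> g \notin S ->
  h \in S -> (forall T : {set M}, T \subset Rem -> #|T| = #|S| -> V T <= V S) ->
  V [set g] <= V [set h].
Proof.
move=> SR gR gS hS opt.
have gD : g \notin S :\ h by rewrite !inE (negbTE gS) andbF.
have e1 : V (g |: (S :\ h)) = V [set g] + V (S :\ h).
  by rewrite (@V_disjU [set g] (S :\ h)) ?disjoints1.
have e2 : V S = V [set h] + V (S :\ h).
  rewrite -(@V_disjU [set h] (S :\ h)) ?setD1K //.
  by rewrite disjoints1 !inE eqxx.
have := opt (g |: (S :\ h)); rewrite e1 e2 lerD2r; apply.
  rewrite subUset sub1set gR /=; apply: subset_trans SR; exact: subD1set.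
by rewrite cardsU1 gD (cardsD1 h S) hS.
Qed.
End Gen.

Section Alloc.
Variable R : realFieldType.
Variable M : finType.
Variable n : nat.

Lemma mms_le (V : 'I_n -> {set M} -> R) i (X : R) : 0 <= X ->
  (forall B : {ffun 'I_n -> {set M}}, is_allocation B -> exists j, V i (B j) <= X) -> mms V i <= X.
Proof.
move=> X0 H; rewrite /mms /seqmax.
set s := map _ _.
have Hs : forall x, x \in s -> x <= X.
  move=> x /mapP [B hB ->]; rewrite mem_enum in hB.
  have [j hj] := H B hB; apply: le_trans hj; apply: bigmin_le.
  by apply: map_f; rewrite mem_enum.
clearbody s; apply: bigmax_le => //.
by case: s Hs => [|a s'] Hs //=; apply: Hs; exact: mem_head.
Qed.

Lemma alloc_disj (B : {ffun 'I_n -> {set M}}) : is_allocation B ->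
  forall i j, i != j -> [disjoint B i & B j].
Proof. by case/andP => /forallP H _ i j; move: (H i) => /forallP /(_ j) /implyP. Qed.

Lemma alloc_sum (B : {ffun 'I_n -> {set M}}) : is_allocation B ->
  (\sum_j #|B j|)%N = #|M|.
Proof.
move=> hB; have := hB; case/andP => _ /eqP cov.
by rewrite -card_disj_bigcup ?cov ?cardsT //; exact: alloc_disj.
Qed.

Lemma alloc_cover (B : {ffun 'I_n -> {set M}}) : is_allocation B ->
  forall x, exists j, x \in B j.
Proof.
case/andP => _ /eqP cov x.
have : x \in \bigcup_(i : 'I_n) B i by rewrite cov inE.
by case/bigcupP => j _ hj; exists j.
Qed.

Lemma exists_small (B : {ffun 'I_n -> {set M}}) : (0 < n)%N -> is_allocation B ->
  exists j, (#|B j| <= #|M| %/ n)%N.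
Proof.
move=> n0 hB; case: (pickP [pred j | #|B j| <= #|M| %/ n]%N) => [j hj|H].
  by exists j.
have := alloc_sum hB.
have : (\sum_(j : 'I_n) (#|M| %/ n).+1 <= \sum_j #|B j|)%N.
  by apply: leq_sum => j _; move: (H j) => /= /negbT; rewrite -ltnNge.
rewrite sum_nat_const card_ord => h1 h2.
have := divn_eq #|M| n; have := ltn_pmod #|M| n0.
move: h1 h2; set m := #|M|; set q := (m %/ n)%N; set rr := (m %% n)%N; set ss := (\sum_j _)%N.
nia.
Qed.

Lemma exists_part (B : {ffun 'I_n -> {set M}}) h : (0 < n)%N -> (#|M| %% n = 0)%N ->
  is_allocation B ->
  exists j, (#|B j| < #|M| %/ n)%N || ((h \in B j) && (#|B j| <= #|M| %/ n)%N).
Proof.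
move=> n0 r0 hB.
case: (pickP [pred j | (#|B j| < #|M| %/ n)%N || ((h \in B j) && (#|B j| <= #|M| %/ n)%N)]) => [j hj|H].
  by exists j.
have [j0 hj0] := alloc_cover hB h.
have := alloc_sum hB; rewrite (bigD1 j0) //=.
have : (\sum_(j | j != j0) #|M| %/ n <= \sum_(j | j != j0) #|B j|)%N.
  apply: leq_sum => j _; move: (H j) => /= /negbT; rewrite negb_or -leqNgt.
  by case/andP.
rewrite sum_nat_const cardC1 card_ord.
have : (#|M| %/ n < #|B j0|)%N.
  by move: (H j0) => /= /negbT; rewrite hj0 /= negb_or => /andP [_ hh]; rewrite ltnNge.
have := divn_eq #|M| n; rewrite r0 addn0.
set m := #|M|; set q := (m %/ n)%N; set a := #|B j0|; set ss := (\sum_(j | _) _)%N.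
move=> e1 e2 e3 e4.
have : (n.-1 * q + q.+1 <= q * n)%N by lia.
have aux : forall N Q : nat, (0 < N)%N -> (N.-1 * Q + Q.+1 <= Q * N)%N -> False.
  by move=> [|N] Q //= _; nia.
by move/(aux _ _ n0).
Qed.
End Alloc.

Lemma alg (R : realFieldType) (k : nat) (mu a b : R) : mu <= a + b -> k%:R * b <= a -> 0 <= b -> k%:R / k.+1%:R * mu <= a.
Proof.
move=> h1 h2 h3; apply: (@le_trans _ _ (k%:R / k.+1%:R * (a + b))).
  by apply: ler_wpM2l => //; rewrite divr_ge0.
rewrite mulrAC ler_pdivrMr ?ltr0Sn // -addn1 natrD.
have : 0 <= k%:R :> R by [].
nra.
Qed.

Section Run.
Variable R : realFieldType.
Variable M : finType.
Variable n : nat.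
Variable V : 'I_n -> {set M} -> R.
Variable sigma : {perm 'I_n}.
Hypothesis n0 : (0 < n)%N.
Hypothesis hV : forall i, additive_leveled (V i).

Definition psn (t : nat) : nat :=
  if (t < n - #|M| %% n)%N then (#|M| %/ n)%N else (#|M| %/ n).+1.

Lemma pick_psn (t : 'I_n) : pick_size M t = psn t.
Proof. by []. Qed.

Lemma psum_closed N : (\sum_(t < N) psn t = N * (#|M| %/ n) + (N - (n - #|M| %% n)))%N.
Proof.
elim: N => [|N IH]; first by rewrite big_ord0.
rewrite big_ord_recr /= IH /psn.
set k := (#|M| %/ n)%N; set r := (#|M| %% n)%N.
case: ifP => h; lia.
Qed.

Lemma psum_n : (\sum_(t < n) psn t = #|M|)%N.
Proof.
rewrite psum_closed; have := divn_eq #|M| n; have := ltn_pmod #|M| n0.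
set k := (#|M| %/ n)%N; set r := (#|M| %% n)%N; set m := #|M|; lia.
Qed.

Lemma run_prop B t : picking_run V sigma B ->
  [/\ B (sigma t) \subset ~: allocated_before sigma B t,
      #|B (sigma t)| = pick_size M t
    & forall S : {set M}, S \subset ~: allocated_before sigma B t -> #|S| = pick_size M t ->
          V (sigma t) S <= V (sigma t) (B (sigma t))].
Proof. by move=> h; exact: (h t). Qed.

Lemma run_disj B : picking_run V sigma B -> forall i j, i != j -> [disjoint B i & B j].
Proof.
move=> hB i j ij.
wlog lt : i j ij / ((sigma^-1)%g i < (sigma^-1)%g j)%N.
  move=> W; case: (ltngtP ((sigma^-1)%g i) ((sigma^-1)%g j)) => [h|h|h].
  - by apply: W.
  - by rewrite disjoint_sym; apply: W => //; rewrite eq_sym.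
  - by move/val_inj/perm_inj: h => h; rewrite h eqxx in ij.
set ti := (sigma^-1)%g i in lt; set tj := (sigma^-1)%g j in lt.
have ei : i = sigma ti by rewrite /ti permKV.
have ej : j = sigma tj by rewrite /tj permKV.
case: (run_prop tj hB) => sub _ _.
have sub2 : B (sigma ti) \subset allocated_before sigma B tj.
  by apply: (bigcup_sup ti (P := fun t' : 'I_n => (t' < tj)%N)).
rewrite ei ej -setI_eq0; apply/eqP/setP => x; rewrite !inE.
apply/negbTE/negP => /andP [xi xj].
by move: (subsetP sub x xj); rewrite inE (subsetP sub2 x xi).
Qed.

Lemma run_alloc B : picking_run V sigma B -> is_allocation B.
Proof.
move=> hB; apply/andP; split.
  by apply/forallP => i; apply/forallP => j; apply/implyP; exact: run_disj.
rewrite eqEcard subsetT cardsT card_disj_bigcup; last exact: run_disj.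
rewrite (reindex_inj (@perm_inj _ sigma)) /=.
rewrite (eq_bigr (fun t : 'I_n => psn t)) ?psum_n // => t _.
by case: (run_prop t hB).
Qed.

Lemma run_mms B : picking_run V sigma B ->
  alpha_MMS V ((#|M| %/ n)%N%:R / (#|M| %/ n).+1%:R) B.
Proof.
move=> hB i.
set k := (#|M| %/ n)%N.
pose t := (sigma^-1)%g i.
have ei : i = sigma t by rewrite /t permKV.
rewrite ei; clearbody t; clear ei i.
case: (run_prop t hB) => sub sz opt.
set S := B (sigma t) in sub sz opt *.
have hVi := hV (sigma t).
case: (posnP k) => [k0|kpos].
  rewrite k0 mul0r mul0r; exact: V_ge0.
case: (ltnP t (n - #|M| %% n)) => ht.
- have cS : #|S| = k by rewrite sz /pick_size ht.
  have S0 : S != set0 by rewrite -card_gt0 cS.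
  have [h hS hmin] := V_min hVi S0; rewrite cS in hmin.
  apply: (alg (b := V (sigma t) [set h])) => //; last exact: V_ge0.
  apply: mms_le; first by rewrite addr_ge0 // V_ge0.
  move=> B' hB'.
  case: (eqVneq (#|M| %% n)%N 0) => r0.
  + have [j /orP [hj | /andP [hj1 hj2]]] := exists_part h n0 r0 hB'.
    * exists j; apply/ltW; apply: (lt_le_trans (V_lev hVi (S:=S) (T:=B' j) _)).
        by rewrite cS.
      by rewrite lerDl V_ge0.
    * by exists j; apply/ltW; apply: key_part => //; rewrite cS.
  + have cA : (#|allocated_before sigma B t| <= n.-1 * k)%N.
      apply: leq_trans (card_bigcup_le _ _) _.
      apply: (@leq_trans (\sum_(t' : 'I_n | t' != t) k)).
        rewrite big_mkcond [X in (_ <= X)%N]big_mkcond /=; apply: leq_sum => t' _.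
        case: ltnP => h1; last by [].
        have -> : t' != t by apply/negP => /eqP e; rewrite e ltnn in h1.
        by case: (run_prop t' hB) => _ -> _; rewrite /pick_size (ltn_trans h1 ht).
      by rewrite sum_nat_const cardC1 card_ord mulnC.
    set Rem := ~: allocated_before sigma B t in sub opt.
    have cR : (k < #|Rem|)%N.
      have := cardsC (allocated_before sigma B t); have := divn_eq #|M| n.
      rewrite -/Rem -/k; move: r0 cA; set A := #|allocated_before _ _ _|; set m := #|M|.
      set r := (m %% n)%N; set RR := #|Rem|; move=> r0 cA e1 e2.
      have aux : forall N, (0 < N)%N -> (N.-1 * k + k = N * k)%N by case=> //= N _; lia.
      move: (aux n n0); lia.
    have : (0 < #|Rem :\: S|)%N.
      have := cardsID S Rem; rewrite (setIidPr sub) cS; lia.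
    case/card_gt0P => g; rewrite inE => /andP [gS gR].
    have hgh := key_swap hVi sub gR gS hS (fun T hT cT => opt T hT (etrans cT sz)).
    have [j hj] := exists_small n0 hB'.
    exists j; apply/ltW; apply: (lt_le_trans (key_gen hVi gS _)); first by rewrite cS.
    by rewrite lerD2l.
- have cS : #|S| = k.+1 by rewrite sz /pick_size ltnNge ht.
  apply: (alg (b := 0)); rewrite ?addr0 ?mulr0 ?V_ge0 //.
  apply: mms_le; first exact: V_ge0.
  move=> B' hB'; have [j hj] := exists_small n0 hB'; exists j; apply/ltW.
  by apply: (V_lev hVi (S:=S)); rewrite cS ltnS.
Qed.

Definition Pok (Rem : {set M}) (s : nat) (S : {set M}) := (S \subset Rem) && (#|S| == s).
Definition chooseb (j : 'I_n) (Rem : {set M}) (s : nat) : {set M} :=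
  if [pick S | Pok Rem s S] is Some S0 then [arg max_(S > S0 | Pok Rem s S) V j S]%O
  else set0.

Lemma chooseb_spec j (Rem : {set M}) s : (s <= #|Rem|)%N ->
  [/\ chooseb j Rem s \subset Rem, #|chooseb j Rem s| = s
    & forall T : {set M}, T \subset Rem -> #|T| = s -> V j T <= V j (chooseb j Rem s)].
Proof.
move=> sR; rewrite /chooseb; case: pickP => [S0 hS0|none].
  case: (arg_maxP (fun S => V j S) hS0) => S /andP [h1 /eqP h2] hmax.
  split=> // T hT cT; apply: hmax; rewrite /Pok hT cT eqxx.
  done.
have [S hS] := subset_of_size sR; by move: (none S); rewrite /= /Pok hS.
Qed.

Let o0 := Ordinal n0.

Fixpoint allocd (t : nat) : {set M} :=
  if t is t'.+1 then
    allocd t' :|: chooseb (sigma (insubd o0 t')) (~: allocd t') (psn t')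
  else set0.

Definition Bc : {ffun 'I_n -> {set M}} :=
  [ffun j => chooseb j (~: allocd ((sigma^-1)%g j)) (psn ((sigma^-1)%g j))].

Lemma BcE (t : 'I_n) : Bc (sigma t) = chooseb (sigma t) (~: allocd t) (psn t).
Proof. by rewrite ffunE permK. Qed.

Lemma psum_mono u : (u <= n)%N -> (\sum_(i < u) psn i <= #|M|)%N.
Proof.
move=> un; rewrite -psum_n !psum_closed.
set k := (#|M| %/ n)%N; set r := (#|M| %% n)%N.
apply: leq_add; first exact: leq_mul.
exact: leq_sub2r.
Qed.

Lemma allocd_card u : (u <= n)%N -> (#|allocd u| <= \sum_(i < u) psn i)%N.
Proof.
elim: u => [|u IH] hu; first by rewrite /= cards0.
rewrite big_ord_recr /=.
apply: leq_trans (leq_card_setU _ _).1 _.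
have IH' := IH (ltnW hu).
have hs : (psn u <= #|~: allocd u|)%N.
  have := psum_mono hu; rewrite big_ord_recr /=.
  have := cardsC (allocd u); move: IH'.
  set a := #|allocd u|; set b := #|~: _|; set F := (\sum_(i < u) _)%N; set p := psn u.
  set m := #|M|; lia.
case: (chooseb_spec (sigma (insubd o0 u)) hs) => _ -> _.
by rewrite leq_add2r.
Qed.

Lemma allocd_eq (t : 'I_n) : allocated_before sigma Bc t = allocd t.
Proof.
apply/setP => x.
suff H : forall u, (u <= n)%N ->
  (x \in allocd u) = [exists t' : 'I_n, (t' < u)%N && (x \in Bc (sigma t'))].
  rewrite H; last by apply: ltnW.
  apply/bigcupP/existsP => [[t' h1 h2]|[t' /andP [h1 h2]]].
    by exists t'; rewrite h1.
  by exists t'.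
elim => [|u IH] hu.
  rewrite /= inE; apply/esym/existsP.
  by move=> [t'].
have vo : val (insubd o0 u) = u by rewrite val_insubd hu.
have e : Bc (sigma (insubd o0 u)) = chooseb (sigma (insubd o0 u)) (~: allocd u) (psn u).
  by rewrite BcE vo.
rewrite /= in_setU (IH (ltnW hu)); apply/orP/existsP.
  case=> [/existsP [t' /andP [lt xin]] | xin].
    by exists t'; rewrite ltnS ltnW.
  by exists (insubd o0 u); rewrite vo ltnSn e.
case=> t' /andP [lt xin]; rewrite ltnS leq_eqVlt in lt.
case/orP: lt => [/eqP e'|lt].
  right; have et : t' = insubd o0 u by apply: val_inj; rewrite vo.
  by rewrite -e -et.
by left; apply/existsP; exists t'; rewrite lt.
Qed.

Lemma Bc_run : picking_run V sigma Bc.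
Proof.
move=> t /=; rewrite allocd_eq BcE pick_psn.
apply: chooseb_spec.
have := allocd_card (ltnW (ltn_ord t)); have := psum_mono (ltn_ord t).
rewrite big_ord_recr /=; have := cardsC (allocd t).
set a := #|allocd t|; set b := #|~: _|; set F := (\sum_(i < t) _)%N; set p := psn t.
set m := #|M|; lia.
Qed.

End Run.


Theorem mainTheorem1 (R : realFieldType) (M : finType) (n : nat)
  (V : 'I_n -> {set M} -> R) (sigma : {perm 'I_n}) :
  (0 < n)%N ->
  (forall i, additive_leveled (V i)) ->
  let k := (#|M| %/ n)%N in
  (forall B : {ffun 'I_n -> {set M}}, picking_run V sigma B ->
     is_allocation B /\ alpha_MMS V (k%:R / k.+1%:R) B)
  /\ (exists B : {ffun 'I_n -> {set M}},
        is_allocation B /\ alpha_MMS V (k%:R / k.+1%:R) B).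
Proof.
move=> n0 hV k; split.
  move=> B hB; split; first exact: (run_alloc n0 hB).
  exact: (run_mms n0 hV hB).
have hB := Bc_run V sigma n0.
exists (Bc V sigma n0); split; first exact: (run_alloc n0 hB).
exact: (run_mms n0 hV hB).
Qed.
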